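(* Let ${}_{\mathfrak Y}\mathfrak B_{\mathfrak X}$ and ${}_{\mathfrak X}\mathfrak C_{\mathfrak W}$ be left-fibrant (respectively left-free, left-principal) graphs of bisets. Then $\mathfrak B\otimes_{\mathfrak X}\mathfrak C$ is a left-fibrant (respectively left-free, left-principal) graph of bisets.
   Context: A graph is a set $V\sqcup E$ with maps $x\mapsto x^-\in V$, $x\mapsto\bar x$, $\bar{\bar x}=x$, $x=x^-\iff x=\bar x\iff x\in V$; $x^+=(\bar x)^-$. Graph morphisms commute with these (may send edges to vertices); simplicial ones send edges to edges. A graph of groups attaches to each $x$ a group $G_x$ and homomorphisms $G_x\to G_{x^-}$, $G_x\to G_{\bar x}$ ($G_x\to G_{\bar x}\to G_x$ identity, both identity for vertices). A $\mathfrak Y$-$\mathfrak X$ graph of bisets: a graph $\mathfrak B$, graph morphisms $\lambda\colon\mathfrak B\to\mathfrak Y$, $\rho\colon\mathfrak B\to\mathfrak X$, $G_{\lambda(z)}$-$G_{\rho(z)}$-bisets $B_z$, and congruences $b\mapsto b^-\colon B_z\to B_{z^-}$, $b\mapsto\bar b\colon B_z\to B_{\bar z}$ w.r.t. the corresponding group homomorphisms, satisfying the same axioms. Product: $\mathfrak B\otimes_{\mathfrak X}\mathfrak C$ has underlying graph $\{(b,c)\mid\rho(b)=\lambda(c)\}$, $(b,c)^-=(b^-,c^-)$, $\overline{(b,c)}=(\bar b,\bar c)$, $\lambda(b,c)=\lambda(b)$, $\rho(b,c)=\rho(c)$, biset $B_b\otimes_{G_{\rho(b)}}C_c$ at $(b,c)$.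 Left-fibrant: $\rho$ simplicial and for every vertex $v$ and edge $f$ of the target with $f^-=\rho(v)$, the map $\bigsqcup_{e\in\rho^{-1}(f),\,e^-=v}G_{\lambda(v)}\otimes_{G_{\lambda(e)}}B_e\to B_v$, $g\otimes b\mapsto gb^-$, is an isomorphism of $G_{\lambda(v)}$-$G_f$-bisets. Left-free: left-fibrant and every $B_z$ free as a left set. Left-principal: left-fibrant, every $B_z$ left-principal (simply transitive left action), and $\rho$ a graph isomorphism. *)

(* Defs.v *)
From Stdlib Require Import Relations ClassicalEpsilon.



Record Group := {
  gcar :> Type;
  gmul : gcar -> gcar -> gcar;
  gone : gcar;
  ginv : gcar -> gcar;
  gmulA : forall x y z, gmul x (gmul y z) = gmul (gmul x y) z;
  gmul1l : forall x, gmul gone x = x;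
  gmulVl : forall x, gmul (ginv x) x = gone }.
Arguments gmul {g}.
Arguments gone {g}.
Arguments ginv {g}.

Definition is_hom {G H : Group} (f : G -> H) : Prop :=
  forall x y, f (gmul x y) = gmul (f x) (f y).

Definition tr {A : Type} (P : A -> Type) {x y : A} (e : x = y) (u : P x) : P y :=
  eq_rect x P u y e.
Arguments tr {A} P {x y} e u.

(* Graphs (Serre style): a set with x |-> x^- and x |-> bar x           *)
Record Graph := { gv :> Type; gst : gv -> gv; gbar : gv -> gv }.
Arguments gst {g}.
Arguments gbar {g}.

Definition is_vertex {X : Graph} (x : X) : Prop := gst x = x.

Definition is_graph (X : Graph) : Prop :=
  (forall x : X, gbar (gbar x) = x) /\
  (forall x : X, is_vertex (gst x)) /\
  (forall x : X, gst x = x <-> gbar x = x).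

Definition is_morphism {X Y : Graph} (f : X -> Y) : Prop :=
  (forall x, f (gst x) = gst (f x)) /\ (forall x, f (gbar x) = gbar (f x)).

Definition is_simplicial {X Y : Graph} (f : X -> Y) : Prop :=
  is_morphism f /\ (forall x, ~ is_vertex x -> ~ is_vertex (f x)).

Definition is_graph_iso {X Y : Graph} (f : X -> Y) : Prop :=
  is_morphism f /\
  exists g : Y -> X, (forall x, g (f x) = x) /\ (forall y, f (g y) = y).

Record GoG (X : Graph) := {
  ggrp : X -> Group;
  ghst : forall x, ggrp x -> ggrp (gst x);
  ghbar : forall x, ggrp x -> ggrp (gbar x) }.
Arguments ggrp {X}.
Arguments ghst {X} g {x}.
Arguments ghbar {X} g {x}.

Definition is_GoG {X : Graph} (G : GoG X) : Prop :=
  is_graph X /\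
  (forall x, is_hom (@ghst X G x)) /\ (forall x, is_hom (@ghbar X G x)) /\
  (forall x (e : gbar (gbar x) = x) (g : ggrp G x),
      tr (ggrp G) e (ghbar G (ghbar G g)) = g) /\
  (forall x (e : gst x = x) (g : ggrp G x), tr (ggrp G) e (ghst G g) = g) /\
  (forall x (e : gbar x = x) (g : ggrp G x), tr (ggrp G) e (ghbar G g) = g).

Section GoBdef.
Variables (Y X : Graph) (GY : GoG Y) (GX : GoG X).

Record GoB := {
  bg : Graph;
  blam : bg -> Y;
  brho : bg -> X;
  bs : bg -> Type;
  blact : forall z, ggrp GY (blam z) -> bs z -> bs z;
  bract : forall z, bs z -> ggrp GX (brho z) -> bs z;
  bmin : forall z, bs z -> bs (gst z);
  bbar : forall z, bs z -> bs (gbar z) }.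

Record IsGoB (B : GoB) : Prop := {
  gob_graph : is_graph (bg B);
  gob_lam_st : forall z, blam B (gst z) = gst (blam B z);
  gob_lam_bar : forall z, blam B (gbar z) = gbar (blam B z);
  gob_rho_st : forall z, brho B (gst z) = gst (brho B z);
  gob_rho_bar : forall z, brho B (gbar z) = gbar (brho B z);
  gob_lact1 : forall z b, blact B z gone b = b;
  gob_lactM : forall z g h b, blact B z (gmul g h) b = blact B z g (blact B z h b);
  gob_ract1 : forall z b, bract B z b gone = b;
  gob_ractM : forall z b g h, bract B z b (gmul g h) = bract B z (bract B z b g) h;
  gob_lract : forall z g b h,
      blact B z g (bract B z b h) = bract B z (blact B z g b) h;
  gob_cong_st : forall z (e1 : gst (blam B z) = blam B (gst z))
                  (e2 : gst (brho B z) = brho B (gst z)) g b h,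
      bmin B z (blact B z g (bract B z b h)) =
      blact B (gst z) (tr (ggrp GY) e1 (ghst GY g))
            (bract B (gst z) (bmin B z b) (tr (ggrp GX) e2 (ghst GX h)));
  gob_cong_bar : forall z (e1 : gbar (blam B z) = blam B (gbar z))
                  (e2 : gbar (brho B z) = brho B (gbar z)) g b h,
      bbar B z (blact B z g (bract B z b h)) =
      blact B (gbar z) (tr (ggrp GY) e1 (ghbar GY g))
            (bract B (gbar z) (bbar B z b) (tr (ggrp GX) e2 (ghbar GX h)));
  gob_bar_bar : forall z (e : gbar (gbar z) = z) b,
      tr (bs B) e (bbar B (gbar z) (bbar B z b)) = b;
  gob_st_vert : forall z (e : gst z = z) b, tr (bs B) e (bmin B z b) = b;
  gob_bar_vert : forall z (e : gbar z = z) b, tr (bs B) e (bbar B z b) = b }.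

(* A map [m] out of a disjoint union of sets, together with the relation [R]
   generating the defining equivalence of a (disjoint union of) balanced
   products, induces a bijection from the quotient onto the target. *)
Definition induces_bijection {T Z : Type} (R : relation T) (m : T -> Z) : Prop :=
  (forall z, exists t, m t = z) /\
  (forall t t', m t = m t' <-> clos_refl_sym_trans T R t t').

Definition fib (B : GoB) (v : bg B) (f : X) : Type :=
  {e : bg B | brho B e = f /\ gst e = v}.

(* the disjoint union  \bigsqcup_e  G_{lam v} x B_e  (before quotienting) *)
Definition fibsum (B : GoB) (v : bg B) (f : X) : Type :=
  {e : fib B v f & (ggrp GY (blam B v) * bs B (proj1_sig e))%type}.

(* relation defining  \bigsqcup_e G_{lam v} (x)_{G_{lam e}} B_e  :
   (g . h, b) ~ (g, h . b), where G_{lam e} acts on G_{lam v} through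
   G_{lam e} -> G_{lam e^-} = G_{lam v} *)
Definition fibrel (B : GoB) (v : bg B) (f : X) : relation (fibsum B v f) :=
  fun t1 t2 => exists (e : fib B v f) (g : ggrp GY (blam B v))
      (h : ggrp GY (blam B (proj1_sig e))) (b : bs B (proj1_sig e))
      (q : gst (blam B (proj1_sig e)) = blam B v),
    t1 = existT _ e (gmul g (tr (ggrp GY) q (ghst GY h)), b) /\
    t2 = existT _ e (g, blact B (proj1_sig e) h b).

Definition fibmap (B : GoB) (v : bg B) (f : X) (t : fibsum B v f) : bs B v :=
  blact B v (fst (projT2 t))
    (tr (bs B) (proj2 (proj2_sig (projT1 t))) (bmin B _ (snd (projT2 t)))).

Definition left_fibrant (B : GoB) : Prop :=
  IsGoB B /\ is_simplicial (brho B) /\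
  forall (v : bg B) (f : X), is_vertex v -> ~ is_vertex f -> gst f = brho B v ->
    induces_bijection (fibrel B v f) (fibmap B v f).

Definition left_free (B : GoB) : Prop :=
  left_fibrant B /\
  forall z g (b : bs B z), blact B z g b = b -> g = gone.

Definition left_principal (B : GoB) : Prop :=
  left_fibrant B /\
  (forall z, (exists b : bs B z, True) /\
             forall b b' : bs B z, exists! g, blact B z g b = b') /\
  is_graph_iso (brho B).

End GoBdef.

Arguments GoB {Y X} GY GX.
Arguments IsGoB {Y X GY GX} B.
Arguments left_fibrant {Y X GY GX} B.
Arguments left_free {Y X GY GX} B.
Arguments left_principal {Y X GY GX} B.
Arguments gob_rho_st {Y X GY GX B} _ z.
Arguments gob_rho_bar {Y X GY GX B} _ z.
Arguments gob_lam_st {Y X GY GX B} _ z.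
Arguments gob_lam_bar {Y X GY GX B} _ z.
Arguments bg {Y X GY GX}.
Arguments blam {Y X GY GX}.
Arguments brho {Y X GY GX}.
Arguments bs {Y X GY GX}.
Arguments blact {Y X GY GX}.
Arguments bract {Y X GY GX}.
Arguments bmin {Y X GY GX}.
Arguments bbar {Y X GY GX}.

Definition Quot {T : Type} (R : relation T) : Type :=
  {P : T -> Prop | exists t, P = clos_refl_sym_trans T R t}.

Definition cls {T : Type} (R : relation T) (t : T) : Quot R :=
  exist _ (clos_refl_sym_trans T R t) (ex_intro _ t eq_refl).

Definition rep {T : Type} {R : relation T} (q : Quot R) : T :=
  proj1_sig (constructive_indefinite_description _ (proj2_sig q)).

Section Product.
Variables (Y X W : Graph) (GY : GoG Y) (GX : GoG X) (GW : GoG W).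
Variables (B : GoB GY GX) (C : GoB GX GW).
Variables (HB : IsGoB B) (HC : IsGoB C).

Definition pcar : Type := {p : (bg B * bg C)%type | brho B (fst p) = blam C (snd p)}.

Definition pst (p : pcar) : pcar :=
  exist _ (gst (fst (proj1_sig p)), gst (snd (proj1_sig p)))
    (eq_trans (gob_rho_st HB _)
      (eq_trans (f_equal gst (proj2_sig p)) (eq_sym (gob_lam_st HC _)))).

Definition pbar (p : pcar) : pcar :=
  exist _ (gbar (fst (proj1_sig p)), gbar (snd (proj1_sig p)))
    (eq_trans (gob_rho_bar HB _)
      (eq_trans (f_equal gbar (proj2_sig p)) (eq_sym (gob_lam_bar HC _)))).

Definition pgraph : Graph := {| gv := pcar; gst := pst; gbar := pbar |}.

Definition tens_rel {b : bg B} {c : bg C} (p : brho B b = blam C c)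
  : relation (bs B b * bs C c) :=
  fun t1 t2 => exists x (h : ggrp GX (brho B b)) y,
    t1 = (bract B b x h, y) /\ t2 = (x, blact C c (tr (ggrp GX) p h) y).

Definition pbs (p : pcar) : Type := Quot (tens_rel (proj2_sig p)).

Definition prep {p : pcar} (q : pbs p) : (bs B (fst (proj1_sig p)) * bs C (snd (proj1_sig p)))%type :=
  rep q.

Definition plam (p : pgraph) : Y := blam B (fst (proj1_sig p)).
Definition prho (p : pgraph) : W := brho C (snd (proj1_sig p)).

Definition plact (p : pgraph) (g : ggrp GY (plam p)) (q : pbs p) : pbs p :=
  cls (tens_rel (proj2_sig p))
    (blact B _ g (fst (prep q)), snd (prep q)).

Definition pract (p : pgraph) (q : pbs p) (h : ggrp GW (prho p)) : pbs p :=
  cls (tens_rel (proj2_sig p))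
    (fst (prep q), bract C _ (snd (prep q)) h).

Definition pmin (p : pgraph) (q : pbs p) : pbs (pst p) :=
  cls (tens_rel (proj2_sig (pst p)))
    (bmin B _ (fst (prep q)), bmin C _ (snd (prep q))).

Definition pbarb (p : pgraph) (q : pbs p) : pbs (pbar p) :=
  cls (tens_rel (proj2_sig (pbar p)))
    (bbar B _ (fst (prep q)), bbar C _ (snd (prep q))).

Definition gob_prod : GoB GY GW :=
  {| bg := pgraph; blam := plam; brho := prho; bs := pbs;
     blact := plact; bract := pract; bmin := pmin; bbar := pbarb |}.

End Product.
Arguments gob_prod {Y X W GY GX GW B C} HB HC.

(* Main.v *)
Require Import Defs.
From Stdlib Require Import Relations ClassicalEpsilon Classical ProofIrrelevance FunctionalExtensionality PropExtensionality.

Lemma tr_irr {A} (P : A -> Type) {x y : A} (e e' : x = y) u : tr P e u = tr P e' u.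
Proof. rewrite (proof_irrelevance _ e e'). reflexivity. Qed.
Lemma tr_refl {A} (P : A -> Type) {x : A} (e : x = x) u : tr P e u = u.
Proof. rewrite (proof_irrelevance _ e eq_refl). reflexivity. Qed.
Lemma tr_tr {A} (P : A -> Type) {x y z : A} (e1 : x = y) (e2 : y = z) (e3 : x = z) u :
  tr P e2 (tr P e1 u) = tr P e3 u.
Proof. destruct e2, e1. symmetry. apply tr_refl. Qed.
Lemma tr_mul {A} (F : A -> Group) {x y : A} (e : x = y) (a b : F x) :
  tr F e (gmul a b) = gmul (tr F e a) (tr F e b).
Proof. destruct e. reflexivity. Qed.
Lemma tr_one {A} (F : A -> Group) {x y : A} (e : x = y) : tr F e gone = gone.
Proof. destruct e. reflexivity. Qed.
Lemma tr_inv {A} (F : A -> Group) {x y : A} (e : x = y) (a : F x) : tr F e (ginv a) = ginv (tr F e a).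
Proof. destruct e. reflexivity. Qed.
Lemma tr_inj {A} (P : A -> Type) {x y : A} (e : x = y) u v : tr P e u = tr P e v -> u = v.
Proof. destruct e. auto. Qed.

Lemma mulVr (G : Group) (x : G) : gmul x (ginv x) = gone.
Proof.
  rewrite <- (gmul1l G (gmul x (ginv x))).
  rewrite <- (gmulVl G (ginv x)) at 1.
  rewrite <- gmulA, (gmulA G (ginv x)), gmulVl, gmul1l, gmulVl. reflexivity.
Qed.
Lemma mulr1 (G : Group) (x : G) : gmul x gone = x.
Proof. rewrite <- (gmulVl G x), gmulA, mulVr, gmul1l. reflexivity. Qed.
Lemma mul_cancel_l (G : Group) (a x y : G) : gmul a x = gmul a y -> x = y.
Proof. intro H. rewrite <- (gmul1l G x), <- (gmul1l G y), <- (gmulVl G a), <- !gmulA, H. reflexivity. Qed.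
Lemma hom_one {G H : Group} (f : G -> H) : is_hom f -> f gone = gone.
Proof.
  intro Hf. apply (mul_cancel_l H (f gone)). rewrite <- Hf, gmul1l, mulr1. reflexivity.
Qed.
Lemma hom_inv {G H : Group} (f : G -> H) : is_hom f -> forall x, f (ginv x) = ginv (f x).
Proof.
  intros Hf x. apply (mul_cancel_l H (f x)). rewrite <- Hf, !mulVr. apply hom_one; auto.
Qed.

Lemma cls_eq {T} (R : relation T) t t' : cls R t = cls R t' <-> clos_refl_sym_trans T R t t'.
Proof.
  split.
  - intro H. apply (f_equal (@proj1_sig _ _)) in H. simpl in H.
    assert (clos_refl_sym_trans T R t' t) as H1.
    { rewrite <- H. apply rst_refl. }
    apply rst_sym; exact H1.
  - intro H. unfold cls.
    assert (E : clos_refl_sym_trans T R t = clos_refl_sym_trans T R t').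
    { apply functional_extensionality; intro u. apply propositional_extensionality.
      split; intro H1.
      + eapply rst_trans; [apply rst_sym; exact H| exact H1].
      + eapply rst_trans; [exact H| exact H1]. }
    revert E. generalize (ex_intro (fun t0 => clos_refl_sym_trans T R t = clos_refl_sym_trans T R t0) t eq_refl).
    generalize (ex_intro (fun t0 => clos_refl_sym_trans T R t' = clos_refl_sym_trans T R t0) t' eq_refl).
    intros e1 e2 E. revert e2. rewrite E. intro e2. f_equal. apply proof_irrelevance.
Qed.

Lemma cls_rep {T} (R : relation T) (q : Quot R) : cls R (rep q) = q.
Proof.
  unfold rep. destruct (constructive_indefinite_description _ (proj2_sig q)) as [t Ht]. simpl.
  destruct q as [P HP]. simpl in *. unfold cls. subst P. f_equal. apply proof_irrelevance.
Qed.

Lemma quot_ind {T} (R : relation T) (P : Quot R -> Prop) : (forall t, P (cls R t)) -> forall q, P q.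
Proof. intros H q. rewrite <- (cls_rep R q). apply H. Qed.

Lemma rep_cls {T} (R : relation T) t : clos_refl_sym_trans T R (rep (cls R t)) t.
Proof. apply cls_eq. apply cls_rep. Qed.

Lemma crst_equiv {T} (R : relation T) :
  (forall a, R a a) -> (forall a b, R a b -> R b a) -> (forall a b c, R a b -> R b c -> R a c) ->
  forall a b, clos_refl_sym_trans T R a b -> R a b.
Proof. intros Hr Hs Ht a b H. induction H; eauto. Qed.
Lemma tr_trans {A} (P : A -> Type) {x y z : A} (e1 : x = y) (e2 : y = z) u :
  tr P e2 (tr P e1 u) = tr P (eq_trans e1 e2) u.
Proof. destruct e2, e1. reflexivity. Qed.
Ltac trirr := match goal with |- tr ?P _ _ = tr _ _ _ => apply (tr_irr P) end.
Lemma tr_back {A} (P : A -> Type) {x y : A} (e : x = y) u : tr P (eq_sym e) (tr P e u) = u.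
Proof. destruct e. reflexivity. Qed.

Lemma ghst_tr {X : Graph} (G : GoG X) {x y : X} (e : x = y) (h : ggrp G x) :
  ghst G (tr (ggrp G) e h) = tr (ggrp G) (f_equal gst e) (ghst G h).
Proof. destruct e. reflexivity. Qed.
Lemma ghbar_tr {X : Graph} (G : GoG X) {x y : X} (e : x = y) (h : ggrp G x) :
  ghbar G (tr (ggrp G) e h) = tr (ggrp G) (f_equal gbar e) (ghbar G h).
Proof. destruct e. reflexivity. Qed.
Lemma ghst_one {X : Graph} (G : GoG X) (HG : is_GoG G) x : ghst G (x:=x) gone = gone.
Proof. destruct HG as [_ [H _]]. apply hom_one. apply H. Qed.
Lemma ghbar_one {X : Graph} (G : GoG X) (HG : is_GoG G) x : ghbar G (x:=x) gone = gone.
Proof. destruct HG as [_ [_ [H _]]]. apply hom_one. apply H. Qed.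
Lemma ghst_mul {X : Graph} (G : GoG X) (HG : is_GoG G) x (a b : ggrp G x) :
  ghst G (gmul a b) = gmul (ghst G a) (ghst G b).
Proof. destruct HG as [_ [H _]]. apply H. Qed.
Lemma ghst_inv {X : Graph} (G : GoG X) (HG : is_GoG G) x (a : ggrp G x) :
  ghst G (ginv a) = ginv (ghst G a).
Proof. destruct HG as [_ [H _]]. apply hom_inv. apply H. Qed.
Lemma ghst_vert {X : Graph} (G : GoG X) (HG : is_GoG G) x (e : gst x = x) (a : ggrp G x) :
  tr (ggrp G) e (ghst G a) = a.
Proof. destruct HG as [_ [_ [_ [_ [H _]]]]]. apply H. Qed.

Section GB.
Variables (Y X : Graph) (GY : GoG Y) (GX : GoG X) (HY : is_GoG GY) (HX : is_GoG GX).
Variables (B : GoB GY GX) (HB : IsGoB B).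

Lemma lact_inv z g (x : bs B z) : blact B z (ginv g) (blact B z g x) = x.
Proof. rewrite <- (gob_lactM _ _ _ _ _ HB), gmulVl, (gob_lact1 _ _ _ _ _ HB). reflexivity. Qed.
Lemma ract_inv z h (x : bs B z) : bract B z (bract B z x h) (ginv h) = x.
Proof. rewrite <- (gob_ractM _ _ _ _ _ HB), mulVr, (gob_ract1 _ _ _ _ _ HB). reflexivity. Qed.

Lemma bmin_ract z (x : bs B z) h (e2 : gst (brho B z) = brho B (gst z)) :
  bmin B z (bract B z x h) = bract B (gst z) (bmin B z x) (tr (ggrp GX) e2 (ghst GX h)).
Proof.
  rewrite <- (gob_lact1 _ _ _ _ _ HB z (bract B z x h)).
  rewrite (gob_cong_st _ _ _ _ _ HB z (eq_sym (gob_lam_st HB z)) e2).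
  rewrite ghst_one, tr_one, (gob_lact1 _ _ _ _ _ HB); auto.
Qed.
Lemma bmin_lact z (x : bs B z) g (e1 : gst (blam B z) = blam B (gst z)) :
  bmin B z (blact B z g x) = blact B (gst z) (tr (ggrp GY) e1 (ghst GY g)) (bmin B z x).
Proof.
  rewrite <- (gob_ract1 _ _ _ _ _ HB z x) at 1.
  rewrite (gob_cong_st _ _ _ _ _ HB z e1 (eq_sym (gob_rho_st HB z))).
  rewrite ghst_one, tr_one, (gob_ract1 _ _ _ _ _ HB); auto.
Qed.
Lemma bbar_ract z (x : bs B z) h (e2 : gbar (brho B z) = brho B (gbar z)) :
  bbar B z (bract B z x h) = bract B (gbar z) (bbar B z x) (tr (ggrp GX) e2 (ghbar GX h)).
Proof.
  rewrite <- (gob_lact1 _ _ _ _ _ HB z (bract B z x h)).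
  rewrite (gob_cong_bar _ _ _ _ _ HB z (eq_sym (gob_lam_bar HB z)) e2).
  rewrite ghbar_one, tr_one, (gob_lact1 _ _ _ _ _ HB); auto.
Qed.
Lemma bbar_lact z (x : bs B z) g (e1 : gbar (blam B z) = blam B (gbar z)) :
  bbar B z (blact B z g x) = blact B (gbar z) (tr (ggrp GY) e1 (ghbar GY g)) (bbar B z x).
Proof.
  rewrite <- (gob_ract1 _ _ _ _ _ HB z x) at 1.
  rewrite (gob_cong_bar _ _ _ _ _ HB z e1 (eq_sym (gob_rho_bar HB z))).
  rewrite ghbar_one, tr_one, (gob_ract1 _ _ _ _ _ HB); auto.
Qed.
Lemma tr_bs_lact {z z'} (E : z = z') g (x : bs B z) :
  tr (bs B) E (blact B z g x) = blact B z' (tr (ggrp GY) (f_equal (blam B) E) g) (tr (bs B) E x).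
Proof. destruct E. reflexivity. Qed.
Lemma tr_bs_ract {z z'} (E : z = z') h (x : bs B z) :
  tr (bs B) E (bract B z x h) = bract B z' (tr (bs B) E x) (tr (ggrp GX) (f_equal (brho B) E) h).
Proof. destruct E. reflexivity. Qed.

Section FR.
Variables (v : bg B) (f : X).
Notation FR := (fibrel Y X GY GX B v f).

Definition qof (e : fib Y X GY GX B v f) : gst (blam B (proj1_sig e)) = blam B v :=
  eq_trans (eq_sym (gob_lam_st HB _)) (f_equal (blam B) (proj2 (proj2_sig e))).

Lemma fibrel_equiv t t' : clos_refl_sym_trans _ FR t t' -> FR t t'.
Proof.
  apply crst_equiv.
  - intros [e [g b]]. exists e, g, gone, b, (qof e). split.
    + rewrite ghst_one, tr_one, mulr1 by auto. reflexivity.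
    + rewrite (gob_lact1 _ _ _ _ _ HB). reflexivity.
  - intros a b [e [g [h [x [q [E1 E2]]]]]]. subst.
    exists e, (gmul g (tr (ggrp GY) q (ghst GY h))), (ginv h), (blact B _ h x), q. split.
    + rewrite ghst_inv, tr_inv, <- gmulA, mulVr, mulr1 by auto. reflexivity.
    + rewrite lact_inv. reflexivity.
  - intros a b c [e [g [h [x [q [E1 E2]]]]]] [e' [g' [h' [x' [q' [E1' E2']]]]]]. subst.
    pose proof (f_equal (@projT1 _ _) E1') as Ee. simpl in Ee. subst e'.
    apply inj_pair2 in E1'. injection E1'; intros; subst.
    rewrite (proof_irrelevance _ q' q).
    exists e, g', (gmul h' h), x, q. split.
    + rewrite ghst_mul, tr_mul, gmulA by auto. reflexivity.
    + rewrite (gob_lactM _ _ _ _ _ HB). reflexivity.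
Qed.

Lemma fibrel_proj t t' : clos_refl_sym_trans _ FR t t' -> proj1_sig (projT1 t) = proj1_sig (projT1 t').
Proof.
  intro H. apply fibrel_equiv in H. destruct H as [e [g [h [x [q [E1 E2]]]]]]. subst. reflexivity.
Qed.

Lemma fibrel_same e g1 b1 g2 b2 :
  clos_refl_sym_trans _ FR (existT _ e (g1,b1)) (existT _ e (g2,b2)) ->
  exists h q, g1 = gmul g2 (tr (ggrp GY) q (ghst GY h)) /\ b2 = blact B _ h b1.
Proof.
  intro H. apply fibrel_equiv in H. destruct H as [e' [g [h [x [q [E1 E2]]]]]].
  pose proof (f_equal (@projT1 _ _) E1) as Ee. simpl in Ee. subst e'.
  apply inj_pair2 in E1. apply inj_pair2 in E2.
  injection E1; injection E2; intros; subst. eauto.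
Qed.
End FR.

End GB.

Section Prod.
Variables (Y X W : Graph) (GY : GoG Y) (GX : GoG X) (GW : GoG W)
  (HY : is_GoG GY) (HX : is_GoG GX) (HW : is_GoG GW)
  (B : GoB GY GX) (C : GoB GX GW) (HB : IsGoB B) (HC : IsGoB C).

Notation pc := (pcar Y X W GY GX GW B C).
Notation TR r := (tens_rel Y X W GY GX GW B C r).
Notation PB := (pbs Y X W GY GX GW B C).

Lemma tens_iff b c (r : brho B b = blam C c) x1 y1 x2 y2 :
  TR r (x1,y1) (x2,y2) <-> exists h, x1 = bract B b x2 h /\ y2 = blact C c (tr (ggrp GX) r h) y1.
Proof.
  unfold tens_rel; split.
  - intros [x [h [y [E1 E2]]]]. injection E1; injection E2; intros; subst. eauto.
  - intros [h [E1 E2]]. subst. exists x2, h, y1. auto.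
Qed.

Lemma tens_equiv b c (r : brho B b = blam C c) t t' :
  clos_refl_sym_trans _ (TR r) t t' -> TR r t t'.
Proof.
  apply crst_equiv.
  - intros [x y]. apply tens_iff. exists gone.
    rewrite (gob_ract1 _ _ _ _ _ HB), tr_one, (gob_lact1 _ _ _ _ _ HC). auto.
  - intros [x1 y1] [x2 y2] H. apply tens_iff in H. destruct H as [h [E1 E2]].
    apply tens_iff. exists (ginv h). subst. rewrite ract_inv by auto.
    rewrite tr_inv, lact_inv by auto. auto.
  - intros [x1 y1] [x2 y2] [x3 y3] H H'. apply tens_iff in H. apply tens_iff in H'.
    destruct H as [h [E1 E2]]. destruct H' as [h' [E1' E2']]. subst.
    apply tens_iff. exists (gmul h' h).
    rewrite (gob_ractM _ _ _ _ _ HB), tr_mul, (gob_lactM _ _ _ _ _ HC). auto.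
Qed.

Lemma tcls_eq b c (r : brho B b = blam C c) x1 y1 x2 y2 :
  cls (TR r) (x1,y1) = cls (TR r) (x2,y2) <->
  exists h, x1 = bract B b x2 h /\ y2 = blact C c (tr (ggrp GX) r h) y1.
Proof.
  rewrite cls_eq. rewrite <- tens_iff. split; [apply tens_equiv| apply rst_step].
Qed.

Lemma pcar_eq (p q : pc) : fst (proj1_sig p) = fst (proj1_sig q) -> snd (proj1_sig p) = snd (proj1_sig q) -> p = q.
Proof.
  destruct p as [[a b] r], q as [[a' b'] r']; simpl; intros; subst. f_equal. apply proof_irrelevance.
Qed.

Lemma rep_cls_tens b c (r : brho B b = blam C c) x y :
  exists x' y' h, rep (cls (TR r) (x,y)) = (x', y') /\ x' = bract B b x h /\
            y = blact C c (tr (ggrp GX) r h) y'.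
Proof.
  pose proof (tens_equiv _ _ _ _ _ (rep_cls (TR r) (x,y))) as H.
  remember (rep (cls (TR r) (x,y))) as t eqn:E0. destruct t as [x' y'].
  apply tens_iff in H. destruct H as [h [H1 H2]]. exists x', y', h. auto.
Qed.

Lemma plact_cls (p : pc) g x y :
  plact Y X W GY GX GW B C HB HC p g (cls (TR (proj2_sig p)) (x,y)) =
  cls (TR (proj2_sig p)) (blact B _ g x, y).
Proof.
  unfold plact, prep. destruct (rep_cls_tens _ _ (proj2_sig p) x y) as [x' [y' [h [E0 [E1 E2]]]]].
  rewrite E0; simpl.
  apply tcls_eq. exists h. rewrite E1, (gob_lract _ _ _ _ _ HB). auto.
Qed.

Lemma pract_cls (p : pc) k x y :
  pract Y X W GY GX GW B C HB HC p (cls (TR (proj2_sig p)) (x,y)) k =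
  cls (TR (proj2_sig p)) (x, bract C _ y k).
Proof.
  unfold pract, prep. destruct (rep_cls_tens _ _ (proj2_sig p) x y) as [x' [y' [h [E0 [E1 E2]]]]].
  rewrite E0; simpl.
  apply tcls_eq. exists h. rewrite E1, E2, (gob_lract _ _ _ _ _ HC). auto.
Qed.

Lemma pmin_cls (p : pc) x y :
  pmin Y X W GY GX GW B C HB HC p (cls (TR (proj2_sig p)) (x,y)) =
  cls (TR (proj2_sig (pst Y X W GY GX GW B C HB HC p))) (bmin B _ x, bmin C _ y).
Proof.
  unfold pmin, prep. destruct (rep_cls_tens _ _ (proj2_sig p) x y) as [x' [y' [h [E0 [E1 E2]]]]].
  rewrite E0; simpl.
  apply tcls_eq. exists (tr (ggrp GX) (eq_sym (gob_rho_st HB _)) (ghst GX h)).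
  rewrite E1, E2. split.
  - apply bmin_ract; auto.
  - rewrite (bmin_lact _ _ _ _ HW C HC _ _ _ (eq_sym (gob_lam_st HC _))).
    f_equal. rewrite ghst_tr, !tr_trans. trirr.
Qed.

Lemma pbarb_cls (p : pc) x y :
  pbarb Y X W GY GX GW B C HB HC p (cls (TR (proj2_sig p)) (x,y)) =
  cls (TR (proj2_sig (pbar Y X W GY GX GW B C HB HC p))) (bbar B _ x, bbar C _ y).
Proof.
  unfold pbarb, prep. destruct (rep_cls_tens _ _ (proj2_sig p) x y) as [x' [y' [h [E0 [E1 E2]]]]].
  rewrite E0; simpl.
  apply tcls_eq. exists (tr (ggrp GX) (eq_sym (gob_rho_bar HB _)) (ghbar GX h)).
  rewrite E1, E2. split.
  - apply bbar_ract; auto.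
  - rewrite (bbar_lact _ _ _ _ HW C HC _ _ _ (eq_sym (gob_lam_bar HC _))).
    f_equal. rewrite ghbar_tr, !tr_trans. trirr.
Qed.

Lemma tr_pbs_cls (p p' : pc) (E : p = p') x y
  (E1 : fst (proj1_sig p) = fst (proj1_sig p')) (E2 : snd (proj1_sig p) = snd (proj1_sig p')) :
  tr PB E (cls (TR (proj2_sig p)) (x,y)) = cls (TR (proj2_sig p')) (tr (bs B) E1 x, tr (bs C) E2 y).
Proof. destruct E. simpl. rewrite !tr_refl. reflexivity. Qed.


Notation pfst p := (fst (proj1_sig p)).
Notation psnd p := (snd (proj1_sig p)).

Ltac normp := repeat first [rewrite plact_cls | rewrite pract_cls | rewrite pmin_cls | rewrite pbarb_cls].

Lemma pgraph_is_graph : is_graph (pgraph Y X W GY GX GW B C HB HC).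
Proof.
  destruct (gob_graph _ _ _ _ _ HB) as [bb [bv bi]].
  destruct (gob_graph _ _ _ _ _ HC) as [cb [cv ci]].
  split; [|split].
  - intro x. apply pcar_eq; simpl; [apply bb|apply cb].
  - intro x. unfold is_vertex. apply pcar_eq; simpl; [apply bv|apply cv].
  - intro x. split; intro H; apply pcar_eq; simpl.
    + apply bi. exact (f_equal (fun p : pc => pfst p) H).
    + apply ci. exact (f_equal (fun p : pc => psnd p) H).
    + apply bi. exact (f_equal (fun p : pc => pfst p) H).
    + apply ci. exact (f_equal (fun p : pc => psnd p) H).
Qed.

Lemma prod_IsGoB : IsGoB (gob_prod HB HC).
Proof.
  constructor.
  - apply pgraph_is_graph.
  - intro z. apply (gob_lam_st HB).
  - intro z. apply (gob_lam_bar HB).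
  - intro z. apply (gob_rho_st HC).
  - intro z. apply (gob_rho_bar HC).
  - intro z. apply quot_ind. intros [x y]. cbn [blact gob_prod].
    rewrite plact_cls, (gob_lact1 _ _ _ _ _ HB). reflexivity.
  - intros z g h. apply quot_ind. intros [x y]. cbn [blact gob_prod].
    rewrite !plact_cls, (gob_lactM _ _ _ _ _ HB). reflexivity.
  - intro z. apply quot_ind. intros [x y]. cbn [bract gob_prod].
    rewrite pract_cls, (gob_ract1 _ _ _ _ _ HC). reflexivity.
  - intros z b g h. revert b. apply quot_ind. intros [x y]. cbn [bract gob_prod].
    rewrite !pract_cls, (gob_ractM _ _ _ _ _ HC). reflexivity.
  - intros z g b h. revert b. apply quot_ind. intros [x y]. cbn [blact bract gob_prod].
    normp. reflexivity.
  - intros z e1 e2 g b h. revert b. apply quot_ind. intros [x y]. cbn [blact bract bmin gob_prod].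
    normp.
    f_equal. f_equal.
    + exact (bmin_lact _ _ _ _ HX B HB (pfst z) x g e1).
    + exact (bmin_ract _ _ _ _ HX C HC (psnd z) y h e2).
  - intros z e1 e2 g b h. revert b. apply quot_ind. intros [x y]. cbn [blact bract bbar gob_prod].
    normp.
    f_equal. f_equal.
    + exact (bbar_lact _ _ _ _ HX B HB (pfst z) x g e1).
    + exact (bbar_ract _ _ _ _ HX C HC (psnd z) y h e2).
  - intros z e. apply quot_ind. intros [x y]. cbn [bbar bs gob_prod].
    rewrite !pbarb_cls.
    rewrite (tr_pbs_cls _ _ e _ _ (f_equal (fun p : pc => pfst p) e) (f_equal (fun p : pc => psnd p) e)).
    f_equal. f_equal.
    + exact (gob_bar_bar _ _ _ _ _ HB (pfst z) _ x).
    + exact (gob_bar_bar _ _ _ _ _ HC (psnd z) _ y).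
  - intros z e. apply quot_ind. intros [x y]. cbn [bmin bs gob_prod].
    rewrite !pmin_cls.
    rewrite (tr_pbs_cls _ _ e _ _ (f_equal (fun p : pc => pfst p) e) (f_equal (fun p : pc => psnd p) e)).
    f_equal. f_equal.
    + exact (gob_st_vert _ _ _ _ _ HB (pfst z) _ x).
    + exact (gob_st_vert _ _ _ _ _ HC (psnd z) _ y).
  - intros z e. apply quot_ind. intros [x y]. cbn [bbar bs gob_prod].
    rewrite !pbarb_cls.
    rewrite (tr_pbs_cls _ _ e _ _ (f_equal (fun p : pc => pfst p) e) (f_equal (fun p : pc => psnd p) e)).
    f_equal. f_equal.
    + exact (gob_bar_vert _ _ _ _ _ HB (pfst z) _ x).
    + exact (gob_bar_vert _ _ _ _ _ HC (psnd z) _ y).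
Qed.

Notation P := (gob_prod HB HC).

Lemma fibmap_cls (v0 : bg P) f (e : bg P) (Ee : brho P e = f /\ gst e = v0) g x y
  (E1 : gst (pfst e) = pfst v0) (E2 : gst (psnd e) = psnd v0) :
  fibmap _ _ _ _ P v0 f (existT _ (exist _ e Ee) (g, cls (TR (proj2_sig e)) (x,y))) =
  cls (TR (proj2_sig v0)) (blact B _ g (tr (bs B) E1 (bmin B _ x)), tr (bs C) E2 (bmin C _ y)).
Proof.
  unfold fibmap. cbn [projT1 projT2 fst snd proj1_sig proj2_sig].
  cbn [blact bmin bs gob_prod].
  rewrite pmin_cls.
  rewrite (tr_pbs_cls _ _ (proj2 Ee) _ _ E1 E2).
  rewrite plact_cls. reflexivity.
Qed.

Lemma prho_simpl (SB : is_simplicial (brho B)) (SC : is_simplicial (brho C)) :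
  is_simplicial (brho P).
Proof.
  split; [split|].
  - intro z. apply (gob_rho_st HC).
  - intro z. apply (gob_rho_bar HC).
  - intros p Hp Hv. apply Hp. cbn [brho gob_prod] in Hv. unfold prho, is_vertex in Hv.
    destruct (classic (is_vertex (psnd p))) as [Hc|Hc];
      [| exfalso; exact (proj2 SC _ Hc Hv)].
    assert (Hl : is_vertex (blam C (psnd p))).
    { unfold is_vertex. rewrite <- (gob_lam_st HC). unfold is_vertex in Hc. rewrite Hc. reflexivity. }
    rewrite <- (proj2_sig p) in Hl.
    destruct (classic (is_vertex (pfst p))) as [Hb|Hb];
      [| exfalso; exact (proj2 SB _ Hb Hl)].
    unfold is_vertex. apply pcar_eq; assumption.
Qed.

Lemma prod_fib (LB : left_fibrant B) (LC : left_fibrant C) (v0 : bg P) (f : W)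
  (Hv : is_vertex v0) (Hf : ~ is_vertex f) (Hfs : gst f = brho P v0) :
  induces_bijection (fibrel _ _ _ _ P v0 f) (fibmap _ _ _ _ P v0 f).
Proof.
  destruct LB as [_ [SB FB]]. destruct LC as [_ [SC FC]].
  assert (Hvv : gst (pfst v0) = pfst v0) by exact (f_equal (fun p : pc => pfst p) Hv).
  assert (Hww : gst (psnd v0) = psnd v0) by exact (f_equal (fun p : pc => psnd p) Hv).
  destruct (FC (psnd v0) f Hww Hf Hfs) as [surjC injC].
  split.
  - cbn [bs gob_prod]. unfold pbs. apply (quot_ind (TR (proj2_sig v0))). intros [x y].
    destruct (surjC y) as [[[e2 [He2f He2w]] [k y2]] HtC].
    unfold fibmap in HtC; cbn [projT1 projT2 fst snd proj1_sig proj2_sig] in HtC.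
    rewrite (tr_irr _ _ He2w) in HtC.
    pose (x' := bract B (pfst v0) x (tr (ggrp GX) (eq_sym (proj2_sig v0)) k)).
    assert (Hend : cls (TR (proj2_sig v0)) (x', tr (bs C) He2w (bmin C e2 y2)) = cls (TR (proj2_sig v0)) (x,y)).
    { rewrite <- HtC. apply tcls_eq. exists (tr (ggrp GX) (eq_sym (proj2_sig v0)) k). split; [reflexivity|].
      rewrite tr_trans, tr_refl. reflexivity. }
    destruct (classic (is_vertex (blam C e2))) as [Hxi|Hxi].
    + assert (re : brho B (pfst v0) = blam C e2) by
        exact (eq_trans (proj2_sig v0) (eq_trans (f_equal (blam C) (eq_sym He2w)) (eq_trans (gob_lam_st HC e2) Hxi))).
      pose (e := exist (fun p : bg B * bg C => brho B (fst p) = blam C (snd p)) (pfst v0, e2) re : pc).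
      assert (Ee : brho P e = f /\ @gst (bg P) e = v0).
      { split; [exact He2f|]. apply pcar_eq; [exact Hvv | exact He2w]. }
      exists (existT _ (exist _ e Ee) (gone, cls (TR re) (x', y2))).
      etransitivity; [exact (fibmap_cls v0 f e Ee gone x' y2 Hvv He2w)|].
      rewrite (gob_st_vert _ _ _ _ _ HB), (gob_lact1 _ _ _ _ _ HB). exact Hend.
    + assert (Hxs : gst (blam C e2) = brho B (pfst v0)) by
        exact (eq_trans (eq_sym (gob_lam_st HC e2)) (eq_trans (f_equal (blam C) He2w) (eq_sym (proj2_sig v0)))).
      destruct (FB (pfst v0) (blam C e2) Hvv Hxi Hxs) as [surjB _].
      destruct (surjB x') as [[[e1 [He1 He1v]] [g x1]] HtB].
      unfold fibmap in HtB; cbn [projT1 projT2 fst snd proj1_sig proj2_sig] in HtB.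
      rewrite (tr_irr _ _ He1v) in HtB.
      pose (e := exist (fun p : bg B * bg C => brho B (fst p) = blam C (snd p)) (e1, e2) He1 : pc).
      assert (Ee : brho P e = f /\ @gst (bg P) e = v0).
      { split; [exact He2f|]. apply pcar_eq; [exact He1v | exact He2w]. }
      exists (existT _ (exist _ e Ee) (g, cls (TR He1) (x1, y2))).
      etransitivity; [exact (fibmap_cls v0 f e Ee g x1 y2 He1v He2w)|]. unfold e; cbn [proj1_sig fst snd]. rewrite HtB. exact Hend.
  - intros t t'. split.
    + intro Heq.
      destruct t as [[[[e1 e2] re] Ee] [g q]], t' as [[[[e1' e2'] re'] Ee'] [g' q']].
      assert (E1 : gst e1 = pfst v0) by exact (f_equal (fun p : pc => pfst p) (proj2 Ee)).
      assert (E2 : gst e2 = psnd v0) by exact (f_equal (fun p : pc => psnd p) (proj2 Ee)).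
      assert (E1' : gst e1' = pfst v0) by exact (f_equal (fun p : pc => pfst p) (proj2 Ee')).
      assert (E2' : gst e2' = psnd v0) by exact (f_equal (fun p : pc => psnd p) (proj2 Ee')).
      assert (He2f : brho C e2 = f) by exact (proj1 Ee).
      assert (He2f' : brho C e2' = f) by exact (proj1 Ee').
      revert q' Heq. refine (quot_ind (TR re') _ _). intros [x1' y2'].
      revert q. refine (quot_ind (TR re) _ _). intros [x1 y2] Heq.
      pose proof (fibmap_cls v0 f _ Ee g x1 y2 E1 E2) as F1.
      pose proof (fibmap_cls v0 f _ Ee' g' x1' y2' E1' E2') as F2.
      cbn [proj2_sig proj1_sig fst snd] in F1, F2.
      pose proof (eq_trans (eq_sym F1) (eq_trans Heq F2)) as Heq2. clear F1 F2 Heq.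
      rename Heq2 into Heq.
      apply tcls_eq in Heq. destruct Heq as [h [Hx Hy]].
      assert (HC1 : clos_refl_sym_trans _ (fibrel _ _ _ _ C (psnd v0) f)
        (existT _ (exist _ e2 (conj He2f E2)) (tr (ggrp GX) (proj2_sig v0) h, y2))
        (existT _ (exist _ e2' (conj He2f' E2')) (gone, y2'))).
      { apply (proj1 (injC _ _)). unfold fibmap; cbn [projT1 projT2 fst snd proj1_sig proj2_sig].
        rewrite (tr_irr _ _ E2), (tr_irr _ _ E2'), (gob_lact1 _ _ _ _ _ HC). symmetry. exact Hy. }
      pose proof (fibrel_proj _ _ _ _ HX C HC _ _ _ _ HC1) as He2. simpl in He2. subst e2'.
      rewrite (proof_irrelevance _ (conj He2f' E2') (conj He2f E2)) in HC1.
      destruct (fibrel_same _ _ _ _ HX C HC _ _ _ _ _ _ _ HC1) as [hh [qc [Hh Hyy]]].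
      rewrite gmul1l in Hh. clear HC1.
      destruct (classic (is_vertex (blam C e2))) as [Hxi|Hxi].
      * assert (Ve1 : gst e1 = e1).
        { destruct (classic (is_vertex e1)) as [H|H]; [exact H|]. exfalso. apply (proj2 SB _ H).
          unfold is_vertex. exact (eq_trans (f_equal gst re) (eq_trans Hxi (eq_sym re))). }
        assert (Ve1' : gst e1' = e1').
        { destruct (classic (is_vertex e1')) as [H|H]; [exact H|]. exfalso. apply (proj2 SB _ H).
          unfold is_vertex. exact (eq_trans (f_equal gst re') (eq_trans Hxi (eq_sym re'))). }
        assert (Hq1 : e1 = pfst v0) by exact (eq_trans (eq_sym Ve1) E1).
        assert (Hq1' : e1' = pfst v0) by exact (eq_trans (eq_sym Ve1') E1').
        subst e1 e1'.
        rewrite !(gob_st_vert _ _ _ _ _ HB) in Hx.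
        assert (Hre : re' = re) by apply proof_irrelevance. subst re'.
        assert (HEe : Ee' = Ee) by apply proof_irrelevance. subst Ee'.
        pose (qv := eq_trans (eq_sym (gob_lam_st HB (pfst v0))) (f_equal (blam B) Hvv)).
        apply rst_step. exists (exist (fun e0 : bg P => brho P e0 = f /\ gst e0 = v0) _ Ee), g', (gmul (ginv g') g), (cls (TR re) (x1,y2)), qv. split.
        -- f_equal. f_equal. rewrite (ghst_vert _ HY _ qv). rewrite gmulA, mulVr, gmul1l. reflexivity.
        -- f_equal. f_equal.
           etransitivity; [| symmetry; exact (plact_cls (exist (fun p : bg B * bg C => brho B (fst p) = blam C (snd p)) (pfst v0, e2) re) _ _ _)].
           cbn [proj1_sig proj2_sig fst snd].
           symmetry. apply tcls_eq. exists h. split.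
           ++ rewrite (gob_lactM _ _ _ _ _ HB), Hx, (gob_lract _ _ _ _ _ HB). f_equal. apply (lact_inv _ _ _ _ B HB).
           ++ rewrite Hyy. f_equal.
              transitivity (tr (ggrp GX) Hxi (ghst GX hh)); [symmetry; apply ghst_vert; auto|].
              replace h with (tr (ggrp GX) (eq_sym (proj2_sig v0)) (tr (ggrp GX) (proj2_sig v0) h)) by apply (tr_back (fun x => ggrp GX x)).
              rewrite Hh, !tr_trans. trirr.
      * assert (Hxs : gst (blam C e2) = brho B (pfst v0)) by exact (eq_trans (eq_sym (gob_lam_st HC e2)) (eq_trans (f_equal (blam C) E2) (eq_sym (proj2_sig v0)))).
        destruct (FB (pfst v0) (blam C e2) Hvv Hxi Hxs) as [_ injB].
        assert (HB1 : clos_refl_sym_trans _ (fibrel _ _ _ _ B (pfst v0) (blam C e2))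
          (existT _ (exist _ e1 (conj re E1)) (g, x1))
          (existT _ (exist _ e1' (conj re' E1')) (g', bract B e1' x1' (tr (ggrp GX) (eq_sym re') hh)))).
        { apply (proj1 (injB _ _)). unfold fibmap; cbn [projT1 projT2 fst snd proj1_sig proj2_sig].
          rewrite (tr_irr _ _ E1), (tr_irr _ _ E1').
          rewrite Hx.
          rewrite (bmin_ract _ _ _ _ HY B HB _ _ _ (eq_sym (gob_rho_st HB _))).
          rewrite (tr_bs_ract _ _ _ _ B).
          rewrite (gob_lract _ _ _ _ _ HB). f_equal.
          replace h with (tr (ggrp GX) (eq_sym (proj2_sig v0)) (tr (ggrp GX) (proj2_sig v0) h)) by apply (tr_back (fun x => ggrp GX x)).
          rewrite Hh, ghst_tr, !tr_trans. trirr. }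
        pose proof (fibrel_proj _ _ _ _ HY B HB _ _ _ _ HB1) as He1. simpl in He1. subst e1'.
        rewrite (proof_irrelevance _ (conj re' E1') (conj re E1)) in HB1.
        destruct (fibrel_same _ _ _ _ HY B HB _ _ _ _ _ _ _ HB1) as [h' [qb [Hg Hxx]]].
        assert (Hre : re' = re) by apply proof_irrelevance. subst re'.
        assert (HEe : Ee' = Ee) by apply proof_irrelevance. subst Ee'.
        apply rst_step. exists (exist (fun e0 : bg P => brho P e0 = f /\ gst e0 = v0) _ Ee), g', h', (cls (TR re) (x1,y2)), qb. split.
        -- f_equal. f_equal. exact Hg.
        -- f_equal. f_equal.
           etransitivity; [| symmetry; exact (plact_cls (exist (fun p : bg B * bg C => brho B (fst p) = blam C (snd p)) (e1, e2) re) _ _ _)].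
           cbn [proj1_sig proj2_sig fst snd].
           etransitivity; [| apply (f_equal (fun u => cls (TR re) (u, y2))); exact Hxx].
           symmetry. apply tcls_eq. exists (tr (ggrp GX) (eq_sym re) hh). split; [reflexivity|].
           rewrite Hyy. f_equal. rewrite tr_trans. symmetry. apply (tr_refl (fun x => ggrp GX x)).
    + intro H. induction H as [a b Hab| a | a b _ IH | a b c _ IH1 _ IH2].
      * destruct Hab as [[e Ee] [g [h [q [qq [E1 E2]]]]]]. subst a b. revert q.
        cbn [bs gob_prod]. unfold pbs. apply (quot_ind (TR (proj2_sig e))). intros [x y].
        cbn [blact gob_prod]. rewrite plact_cls.
        assert (E1' : gst (pfst e) = pfst v0) by exact (f_equal (fun p : pc => pfst p) (proj2 Ee)).
        assert (E2' : gst (psnd e) = psnd v0) by exact (f_equal (fun p : pc => psnd p) (proj2 Ee)).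
        rewrite !(fibmap_cls v0 f e Ee _ _ _ E1' E2').
        apply tcls_eq. exists gone. rewrite tr_one, (gob_lact1 _ _ _ _ _ HC), (gob_ract1 _ _ _ _ _ HB).
        split; [|reflexivity].
        rewrite (bmin_lact _ _ _ _ HX B HB _ _ _ (eq_sym (gob_lam_st HB _))).
        rewrite (tr_bs_lact _ _ _ _ B), <- (gob_lactM _ _ _ _ _ HB).
        f_equal. f_equal. rewrite tr_trans. trirr.
      * reflexivity.
      * symmetry; exact IH.
      * rewrite IH1; exact IH2.
Qed.

Lemma prod_left_fibrant : left_fibrant B -> left_fibrant C -> left_fibrant P.
Proof.
  intros LB LC. split; [apply prod_IsGoB| split].
  - apply prho_simpl; [exact (proj1 (proj2 LB)) | exact (proj1 (proj2 LC))].
  - intros. apply prod_fib; auto.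
Qed.

Lemma prod_left_free : left_free B -> left_free C -> left_free P.
Proof.
  intros [LB FrB] [LC FrC]. split; [apply prod_left_fibrant; auto|].
  intros z g. cbn [bs blact gob_prod]. unfold pbs. refine (quot_ind (TR (proj2_sig z)) _ _). intros [x y].
  rewrite plact_cls. intro H. apply tcls_eq in H. destruct H as [h [H1 H2]].
  assert (Hh : h = gone).
  { apply (tr_inj (fun x => ggrp GX x) (proj2_sig z)). rewrite tr_one.
    apply (FrC _ _ y). symmetry. exact H2. }
  subst h. rewrite (gob_ract1 _ _ _ _ _ HB) in H1. exact (FrB _ _ _ H1).
Qed.

Lemma prod_left_principal : left_principal B -> left_principal C -> left_principal P.
Proof.
  intros [LB [PB IB]] [LC [PC IC]]. split; [apply prod_left_fibrant; auto| split].
  - intro z. split.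
    + destruct (proj1 (PB (pfst z))) as [x _]. destruct (proj1 (PC (psnd z))) as [y _].
      exists (cls (TR (proj2_sig z)) (x,y)). auto.
    + cbn [bs blact gob_prod]. unfold pbs.
      refine (quot_ind (TR (proj2_sig z)) _ _). intros [x y].
      refine (quot_ind (TR (proj2_sig z)) _ _). intros [x' y'].
      destruct (proj2 (PC (psnd z)) y y') as [k [Hk Hku]].
      pose (h0 := tr (ggrp GX) (eq_sym (proj2_sig z)) k).
      destruct (proj2 (PB (pfst z)) x (bract B _ x' h0)) as [g [Hg Hgu]].
      exists g. split.
      * rewrite plact_cls. apply tcls_eq. exists h0. split; [exact Hg|].
        unfold h0. rewrite tr_trans, tr_refl. symmetry. exact Hk.
      * intros g2 H2. rewrite plact_cls in H2. apply tcls_eq in H2. destruct H2 as [h2 [H21 H22]].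
        assert (Hh : tr (ggrp GX) (proj2_sig z) h2 = k) by (symmetry; apply Hku; symmetry; exact H22).
        assert (Hh2 : h2 = h0).
        { unfold h0. rewrite <- Hh. symmetry. apply (tr_back (fun x => ggrp GX x)). }
        subst h2. apply Hgu. exact H21.
  - destruct IB as [_ [gB [gB1 gB2]]]. destruct IC as [_ [gC [gC1 gC2]]]. split.
    + exact (proj1 (prho_simpl (proj1 (proj2 LB)) (proj1 (proj2 LC)))).
    + exists (fun w => exist (fun p : bg B * bg C => brho B (fst p) = blam C (snd p))
                        (gB (blam C (gC w)), gC w) (gB2 _)).
      split.
      * intro p. apply pcar_eq; cbn [proj1_sig fst snd brho gob_prod]; unfold prho.
        -- rewrite gC1, <- (proj2_sig p), gB1. reflexivity.
        -- apply gC1.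
      * intro w. cbn [brho gob_prod]. unfold prho. cbn [proj1_sig snd]. apply gC2.
Qed.

End Prod.

Theorem mainTheorem13 (Y X W : Graph) (GY : GoG Y) (GX : GoG X) (GW : GoG W)
  (HY : is_GoG GY) (HX : is_GoG GX) (HW : is_GoG GW)
  (B : GoB GY GX) (C : GoB GX GW) (HB : IsGoB B) (HC : IsGoB C) :
  (left_fibrant B -> left_fibrant C -> left_fibrant (gob_prod HB HC)) /\
  (left_free B -> left_free C -> left_free (gob_prod HB HC)) /\
  (left_principal B -> left_principal C -> left_principal (gob_prod HB HC)).
Proof.
  split; [|split]; intros.
  - eapply prod_left_fibrant; eauto.
  - eapply prod_left_free; eauto.
  - eapply prod_left_principal; eauto.
Qed.
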